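(* Let $X$ be a quasi-Polish space and $E$ an equivalence relation on $X$ such that the $E$-saturation of every open set is open. Then one may adjoin countably many $E$-invariant closed sets to the topology of $X$ so that, for the resulting topology, $X/\!/E$ has the same elements (the same $\approx_E$-classes) as before but is Polish.
   Context: For a topology on $X$, $x\approx_E y$ iff $\overline{[x]_E}=\overline{[y]_E}$, and $X/\!/E:=X/{\approx_E}$ with the quotient topology. A quasi-Polish space is a space homeomorphic to a $\mathbf\Pi^0_2$ subset of $\mathbb S^{\mathbb N}$, where $\mathbb S$ is the Sierpiński space and $\mathbf\Pi^0_2$ means a countable intersection of sets $U\cup F$ with $U$ open and $F$ closed. *)

(* Defs.v *)
From Stdlib Require Import Reals List Classical.
Open Scope R_scope.

Definition opfam (X : Type) := (X -> Prop) -> Prop.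

Definition complementS {X : Type} (A : X -> Prop) : X -> Prop := fun x => ~ A x.

Definition is_topology {X : Type} (T : opfam X) : Prop :=
  T (fun _ => True) /\
  (forall U V, T U -> T V -> T (fun x => U x /\ V x)) /\
  (forall (I : Type) (U : I -> X -> Prop), (forall i, T (U i)) ->
      T (fun x => exists i, U i x)).

Definition gen_top {X : Type} (S : opfam X) : opfam X :=
  fun U => forall T : opfam X, is_topology T -> (forall V, S V -> T V) -> T U.

Definition closureT {X : Type} (tau : opfam X) (A : X -> Prop) : X -> Prop :=
  fun x => forall U, tau U -> U x -> exists y, U y /\ A y.

Definition saturation {X : Type} (E : X -> X -> Prop) (A : X -> Prop) : X -> Prop :=
  fun y => exists x, A x /\ E x y.

Definition equivalence_rel {X : Type} (E : X -> X -> Prop) : Prop :=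
  (forall x, E x x) /\ (forall x y, E x y -> E y x) /\
  (forall x y z, E x y -> E y z -> E x z).

Definition approxE {X : Type} (tau : opfam X) (E : X -> X -> Prop) (x y : X) : Prop :=
  closureT tau (E x) = closureT tau (E y).

Definition approx_class {X : Type} (tau : opfam X) (E : X -> X -> Prop) (x : X)
  : X -> Prop := fun y => approxE tau E x y.

(* Carrier of X//E: the ≈_E-classes. *)
Definition qtype {X : Type} (tau : opfam X) (E : X -> X -> Prop) : Type :=
  { A : X -> Prop | exists x, A = approx_class tau E x }.

Definition qproj {X : Type} (tau : opfam X) (E : X -> X -> Prop) (x : X)
  : qtype tau E := exist _ (approx_class tau E x) (ex_intro _ x eq_refl).

Definition quot_top {X : Type} (tau : opfam X) (E : X -> X -> Prop)
  : opfam (qtype tau E) :=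
  fun U => tau (fun x => U (qproj tau E x)).

Definition is_metric {T : Type} (d : T -> T -> R) : Prop :=
  (forall x y, 0 <= d x y) /\ (forall x y, d x y = 0 <-> x = y) /\
  (forall x y, d x y = d y x) /\ (forall x y z, d x z <= d x y + d y z).

Definition metric_open {T : Type} (d : T -> T -> R) (U : T -> Prop) : Prop :=
  forall x, U x -> exists eps, 0 < eps /\ (forall y, d x y < eps -> U y).

Definition metric_complete {T : Type} (d : T -> T -> R) : Prop :=
  forall s : nat -> T,
    (forall eps, 0 < eps -> exists N, forall m n, (N <= m)%nat -> (N <= n)%nat ->
        d (s m) (s n) < eps) ->
    exists l, forall eps, 0 < eps -> exists N, forall n, (N <= n)%nat -> d (s n) l < eps.

Definition countable_set {T : Type} (D : T -> Prop) : Prop :=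
  exists f : nat -> option T, forall x, D x -> exists n, f n = Some x.

Definition separable {T : Type} (sigma : opfam T) : Prop :=
  exists D : T -> Prop, countable_set D /\
    forall U, sigma U -> (exists x, U x) -> exists x, U x /\ D x.

Definition polish {T : Type} (sigma : opfam T) : Prop :=
  separable sigma /\
  exists d : T -> T -> R, is_metric d /\ metric_complete d /\
    (forall U, sigma U <-> metric_open d U).

(* Sierpinski space S = {false, true} with open set {true}; S^N with product topology. *)
Definition sier_open (U : (nat -> bool) -> Prop) : Prop :=
  forall x, U x -> exists F : list nat,
    (forall i, In i F -> x i = true) /\
    (forall y, (forall i, In i F -> y i = true) -> U y).

Definition sier_Pi02 (A : (nat -> bool) -> Prop) : Prop :=
  exists (U F : nat -> (nat -> bool) -> Prop),
    (forall n, sier_open (U n)) /\ (forall n, sier_open (complementS (F n))) /\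
    (forall x, A x <-> forall n, U n x \/ F n x).

Definition quasi_polish {X : Type} (tau : opfam X) : Prop :=
  exists (A : (nat -> bool) -> Prop) (h : X -> (nat -> bool)),
    sier_Pi02 A /\
    (forall x y, h x = h y -> x = y) /\
    (forall a, A a <-> exists x, h x = a) /\
    (forall V, tau V <-> exists U, sier_open U /\ forall x, V x <-> U (h x)).

(* Main.v *)
Require Import Defs.
From Stdlib Require Import Reals List Classical.
From Stdlib Require Import Arith Lia Lra Cantor ClassicalEpsilon ProofIrrelevance PropExtensionality FunctionalExtensionality.
Open Scope R_scope.
Lemma least_ex0 : forall P : nat -> Prop, (exists n, P n) -> exists n, P n /\ forall m, (m < n)%nat -> ~ P m.
Proof.
  intros P [n Hn]. revert Hn. induction n as [n IH] using (well_founded_induction lt_wf).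
  intro Hn. destruct (classic (exists m, (m < n)%nat /\ P m)) as [[m [Hm1 Hm2]]|Hno].
  - exact (IH m Hm1 Hm2).
  - exists n. split; auto. intros m Hm Pm. apply Hno. eauto.
Qed.

Definition dpred (a b : nat -> nat) (p : nat) : Prop := a p <> b p /\ forall i, (i < p)%nat -> a i = b i.

Definition delta (a b : nat -> nat) : R :=
  match excluded_middle_informative (exists p, dpred a b p) with
  | left H => / INR (S (proj1_sig (constructive_indefinite_description _ H)))
  | right _ => 0
  end.

Lemma dpred_ex : forall a b, (exists m, a m <> b m) -> exists p, dpred a b p.
Proof.
  intros a b H. destruct (least_ex0 (fun m => a m <> b m) H) as [p [Hp Hl]].
  exists p. split; auto. intros i Hi. apply NNPP. intro Hn. exact (Hl i Hi Hn).
Qed.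

Lemma dpred_unique : forall a b p q, dpred a b p -> dpred a b q -> p = q.
Proof.
  intros a b p q [H1 L1] [H2 L2]. destruct (lt_eq_lt_dec p q) as [[Hl|He]|Hl]; auto.
  - exfalso. apply H1. apply L2. auto.
  - exfalso. apply H2. apply L1. auto.
Qed.

Lemma delta_cases : forall a b, (delta a b = 0 /\ forall i, a i = b i) \/
  (exists p, delta a b = / INR (S p) /\ dpred a b p).
Proof.
  intros a b. unfold delta. destruct (excluded_middle_informative (exists p, dpred a b p)) as [H|H].
  - right. destruct (constructive_indefinite_description _ H) as [p Hp]. simpl. eauto.
  - left. split; auto. intro i. apply NNPP. intro Hn. apply H. apply dpred_ex. eauto.
Qed.

Lemma inv_pos : forall p, 0 < / INR (S p).
Proof. intro p. apply Rinv_0_lt_compat. apply lt_0_INR. lia. Qed.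

Lemma inv_lt : forall p q, (p < q)%nat -> / INR (S q) < / INR (S p).
Proof.
  intros p q H. apply Rinv_lt_contravar.
  - apply Rmult_lt_0_compat; apply lt_0_INR; lia.
  - apply lt_INR. lia.
Qed.

Lemma inv_le : forall p q, (p <= q)%nat -> / INR (S q) <= / INR (S p).
Proof.
  intros p q H. apply Rinv_le_contravar.
  - apply lt_0_INR; lia.
  - apply le_INR. lia.
Qed.

Lemma delta_nonneg : forall a b, 0 <= delta a b.
Proof.
  intros a b. destruct (delta_cases a b) as [[-> _]|[p [-> _]]]; [lra|]. left. apply inv_pos.
Qed.

Lemma delta_zero : forall a b, delta a b = 0 <-> forall i, a i = b i.
Proof.
  intros a b. destruct (delta_cases a b) as [[-> H]|[p [-> [Hp _]]]].
  - split; auto.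
  - split.
    + intro H. pose proof (inv_pos p). lra.
    + intro H. exfalso. auto.
Qed.

Lemma delta_sym : forall a b, delta a b = delta b a.
Proof.
  intros a b. destruct (delta_cases a b) as [[-> H]|[p [-> [Hp Lp]]]];
  destruct (delta_cases b a) as [[-> H']|[q [-> [Hq Lq]]]]; auto.
  - exfalso. apply Hq. auto.
  - exfalso. apply Hp. auto.
  - f_equal. f_equal. f_equal. apply (dpred_unique a b).
    + split; auto.
    + split; [auto|]. intros i Hi. symmetry. auto.
Qed.

Lemma delta_ge : forall a b p, a p <> b p -> / INR (S p) <= delta a b.
Proof.
  intros a b p H. destruct (delta_cases a b) as [[_ Hall]|[q [-> [Hq Lq]]]].
  - exfalso. auto.
  - apply inv_le. destruct (le_lt_dec q p); auto. exfalso. apply H. auto.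
Qed.

Lemma delta_tri : forall a b c, delta a c <= delta a b + delta b c.
Proof.
  intros a b c. pose proof (delta_nonneg a b). pose proof (delta_nonneg b c).
  destruct (delta_cases a c) as [[-> _]|[p [-> [Hp _]]]]; [lra|].
  destruct (Nat.eq_dec (a p) (b p)) as [He|Hne].
  - assert (b p <> c p) by congruence. pose proof (delta_ge b c p H1). lra.
  - pose proof (delta_ge a b p Hne). lra.
Qed.

Lemma delta_lt : forall a b m, (forall i, (i <= m)%nat -> a i = b i) <-> delta a b < / INR (S m).
Proof.
  intros a b m. destruct (delta_cases a b) as [[-> Hall]|[p [-> [Hp Lp]]]].
  - split; auto. intros _. apply inv_pos.
  - split.
    + intro H. apply inv_lt. destruct (le_lt_dec p m); auto. exfalso. apply Hp. auto.
    + intros H i Hi. apply Lp. destruct (le_lt_dec p m) as [Hl|Hl]; [|lia].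
      pose proof (inv_le p m Hl). lra.
Qed.

Local Open Scope nat_scope.
Definition mem (G i : nat) : Prop := Nat.testbit G i = true.

Lemma code_of_list : forall l : list nat, exists G, forall i, mem G i <-> In i l.
Proof.
  induction l as [|a l IH].
  - exists 0. intro i. unfold mem. rewrite Nat.bits_0. simpl. split; congruence || tauto.
  - destruct IH as [G HG]. exists (Nat.setbit G a). intro i. unfold mem.
    rewrite Nat.setbit_iff. simpl. specialize (HG i). unfold mem in HG. tauto.
Qed.

Lemma mem_lt : forall G i, mem G i -> i < G.
Proof.
  intros G i H. unfold mem in H. destruct (Nat.eq_dec G 0) as [->|Hn].
  - rewrite Nat.bits_0 in H. discriminate.
  - destruct (le_lt_dec i (Nat.log2 G)) as [Hl|Hl].
    + pose proof (Nat.log2_lt_lin G). lia.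
    + rewrite Nat.bits_above_log2 in H by exact Hl. discriminate.
Qed.

Lemma list_of_code : forall G, exists l : list nat, forall i, mem G i <-> In i l.
Proof.
  intro G. exists (filter (fun i => Nat.testbit G i) (seq 0 G)). intro i.
  rewrite filter_In, in_seq. unfold mem. split.
  - intro H. split; [|exact H]. pose proof (mem_lt G i H). lia.
  - tauto.
Qed.

Lemma mem_lor : forall G H i, mem (Nat.lor G H) i <-> mem G i \/ mem H i.
Proof.
  intros. unfold mem. rewrite Nat.lor_spec. destruct (Nat.testbit G i), (Nat.testbit H i); simpl; intuition congruence.
Qed.

Lemma mem_0 : forall i, ~ mem 0 i.
Proof. intros i H. unfold mem in H. rewrite Nat.bits_0 in H. discriminate. Qed.

Definition BS (G : nat) (a : nat -> bool) : Prop := forall i, mem G i -> a i = true.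

Lemma sier_open_BS : forall G, sier_open (BS G).
Proof.
  intros G a Ha. destruct (list_of_code G) as [l Hl]. exists l. split.
  - intros i Hi. apply Ha. apply Hl. exact Hi.
  - intros y Hy i Hi. apply Hy. apply Hl. exact Hi.
Qed.

Lemma sier_open_basic : forall U a, sier_open U -> U a ->
  exists G, BS G a /\ forall b, BS G b -> U b.
Proof.
  intros U a HU Ha. destruct (HU a Ha) as [l [Hl1 Hl2]].
  destruct (code_of_list l) as [G HG]. exists G. split.
  - intros i Hi. apply Hl1. apply HG. exact Hi.
  - intros b Hb. apply Hl2. intros i Hi. apply Hb. apply HG. exact Hi.
Qed.

Lemma gen_top_topology : forall (Y : Type) (S : opfam Y), is_topology (gen_top S).
Proof.
  intros Y S. split; [|split].
  - intros T HT _. apply HT.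
  - intros U V HUo HVo T HT HS. apply HT; [apply HUo|apply HVo]; auto.
  - intros I U HUi T HT HS. apply HT. intro i. apply HUi; auto.
Qed.

Lemma gen_top_incl : forall (Y : Type) (S : opfam Y) V, S V -> gen_top S V.
Proof. intros Y S V HV T HT HS. apply HS. exact HV. Qed.

Lemma gen_top_ext : forall (Y : Type) (S : opfam Y) (U V : Y -> Prop),
  gen_top S U -> (forall x, U x <-> V x) -> gen_top S V.
Proof.
  intros Y S U V HU HUV. assert (U = V) as <-; [|exact HU].
  apply functional_extensionality. intro x. apply propositional_extensionality. apply HUV.
Qed.

Lemma sier_open_inter : forall U V, sier_open U -> sier_open V -> sier_open (fun a => U a /\ V a).
Proof.
  intros U V HU HV a [Ua Va]. destruct (HU a Ua) as [l1 [H11 H12]]. destruct (HV a Va) as [l2 [H21 H22]].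
  exists (l1 ++ l2). split.
  - intros i Hi. apply in_app_or in Hi. destruct Hi; auto.
  - intros y Hy. split; [apply H12|apply H22]; intros i Hi; apply Hy; apply in_or_app; auto.
Qed.

Lemma sier_open_True : sier_open (fun _ => True).
Proof. intros a _. exists nil. split; simpl; tauto. Qed.

Section Main.
Variables (X : Type) (tau : opfam X) (E : X -> X -> Prop) (h : X -> nat -> bool)
  (A : (nat -> bool) -> Prop) (Un Fn : nat -> (nat -> bool) -> Prop).
Hypothesis HU : forall n, sier_open (Un n).
Hypothesis HF : forall n, sier_open (complementS (Fn n)).
Hypothesis HA : forall a, A a <-> forall n, Un n a \/ Fn n a.
Hypothesis Himg : forall a, A a <-> exists x, h x = a.
Hypothesis Htau : forall V, tau V <-> exists U, sier_open U /\ forall x, V x <-> U (h x).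
Hypothesis HEr : forall x, E x x.
Hypothesis HEs : forall x y, E x y -> E y x.
Hypothesis HEt : forall x y z, E x y -> E y z -> E x z.
Hypothesis Hsat : forall U, tau U -> tau (saturation E U).

Definition B (G : nat) (x : X) : Prop := BS G (h x).
Definition W (G : nat) : X -> Prop := saturation E (B G).

Lemma tau_ext : forall U V, tau U -> (forall x, U x <-> V x) -> tau V.
Proof.
  intros U V HUo HUV. apply Htau in HUo. destruct HUo as [U' [H1 H2]].
  apply Htau. exists U'. split; [exact H1|]. intro x. rewrite <- HUV. apply H2.
Qed.

Lemma tau_basic : forall V x, tau V -> V x -> exists G, B G x /\ forall y, B G y -> V y.
Proof.
  intros V x HV Vx. apply Htau in HV. destruct HV as [U' [HU' HVU]].
  destruct (sier_open_basic U' (h x) HU') as [G [HG1 HG2]].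
  - apply HVU. exact Vx.
  - exists G. split; [exact HG1|]. intros y Hy. apply HVU. apply HG2. exact Hy.
Qed.

Lemma B_open : forall G, tau (B G).
Proof.
  intro G. apply Htau. exists (BS G). split; [apply sier_open_BS|]. intro x. unfold B. tauto.
Qed.

Lemma W_open : forall G, tau (W G).
Proof. intro G. apply Hsat. apply B_open. Qed.

Lemma W_inv : forall G x y, W G x -> E x y -> W G y.
Proof.
  intros G x y [z [Hz Hzx]] Hxy. exists z. split; [exact Hz|]. eapply HEt; eauto.
Qed.

Lemma W_B : forall G x, B G x -> W G x.
Proof. intros G x Hx. exists x. split; auto. Qed.

Lemma W_0 : forall x, W 0 x.
Proof. intro x. apply W_B. intros i Hi. exfalso. exact (mem_0 i Hi). Qed.

Lemma W_sub_open : forall G (V : X -> Prop), (forall y, B G y -> V y) -> (forall x y, V x -> E x y -> V y) ->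
  forall y, W G y -> V y.
Proof.
  intros G V HB HV y [z [Hz Hzy]]. apply (HV z); auto.
Qed.

Lemma sat_inv : forall (V : X -> Prop) x y, saturation E V x -> E x y -> saturation E V y.
Proof.
  intros V x y [z [Hz Hzx]] Hxy. exists z. split; [exact Hz|]. eapply HEt; eauto.
Qed.


Lemma tau_True : tau (fun _ => True).
Proof. apply Htau. exists (fun _ => True). split; [apply sier_open_True|]. tauto. Qed.

Lemma tau_inter : forall U V, tau U -> tau V -> tau (fun x => U x /\ V x).
Proof.
  intros U V HUo HVo. apply Htau in HUo. apply Htau in HVo.
  destruct HUo as [U' [HU1 HU2]]. destruct HVo as [V' [HV1 HV2]].
  apply Htau. exists (fun a => U' a /\ V' a). split; [apply sier_open_inter; auto|].
  intro x. rewrite HU2, HV2. tauto.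
Qed.

Definition C (n : nat) : X -> Prop := complementS (W n).
Definition Sgen : opfam X := fun V => tau V \/ exists n, V = C n.
Definition tau' : opfam X := gen_top Sgen.

Lemma tau_tau' : forall V, tau V -> tau' V.
Proof. intros V HV. apply gen_top_incl. left. exact HV. Qed.

Lemma C_open' : forall n, tau' (C n).
Proof. intros n. apply gen_top_incl. right. exists n. reflexivity. Qed.

Definition local_form (U : X -> Prop) : Prop :=
  forall z, U z -> exists O Ls, tau O /\ O z /\ (forall l, In l Ls -> C l z) /\
     forall w, O w -> (forall l, In l Ls -> C l w) -> U w.

Lemma tau'_local : forall U, tau' U -> local_form U.
Proof.
  intros U HU0. apply HU0.
  - split; [|split].
    + intros z _. exists (fun _ => True), nil. repeat split; auto using tau_True. simpl; tauto.
    + intros U1 U2 H1 H2 z [z1 z2].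
      destruct (H1 z z1) as [O1 [L1 [HO1 [Oz1 [HL1 Hw1]]]]].
      destruct (H2 z z2) as [O2 [L2 [HO2 [Oz2 [HL2 Hw2]]]]].
      exists (fun x => O1 x /\ O2 x), (L1 ++ L2). split; [apply tau_inter; auto|].
      split; [auto|]. split.
      * intros l Hl. apply in_app_or in Hl. destruct Hl; auto.
      * intros w [Ow1 Ow2] Hw. split; [apply Hw1|apply Hw2]; auto; intros l Hl; apply Hw; apply in_or_app; auto.
    + intros I Ui Hi z [i Hz]. destruct (Hi i z Hz) as [O [L [HO [Oz [HL Hw]]]]].
      exists O, L. repeat split; auto. intros w Ow Hl. exists i. auto.
  - intros V [HV|[n ->]] z Vz.
    + exists V, nil. repeat split; auto. simpl; tauto.
    + exists (fun _ => True), (n :: nil). repeat split; auto using tau_True.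
      * intros l [<-|[]]. exact Vz.
      * intros w _ Hl. apply Hl. left; auto.
Qed.

Lemma cl_tau : forall x z, closureT tau (E x) z <-> forall b, W b z -> W b x.
Proof.
  intros x z. split.
  - intros Hc b Hb. destruct (Hc (W b) (W_open b) Hb) as [y [Wy Exy]].
    apply (W_inv b y x Wy). auto.
  - intros Hb U HUo Uz. destruct (tau_basic U z HUo Uz) as [G [BG HG]].
    destruct (Hb G (W_B G z BG)) as [y [By Eyx]]. exists y. split; auto.
Qed.

Lemma cl_tau' : forall x z, closureT tau' (E x) z <-> forall b, W b z <-> W b x.
Proof.
  intros x z. split.
  - intros Hc b. split.
    + intros Hb. destruct (Hc (W b) (tau_tau' _ (W_open b)) Hb) as [y [Wy Exy]].
      apply (W_inv b y x Wy). auto.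
    + intros Hb. apply NNPP. intro Hn. destruct (Hc (C b) (C_open' b) Hn) as [y [Cy Exy]].
      apply Cy. apply (W_inv b x y); auto.
  - intros Hb U HUo Uz. destruct (tau'_local U HUo z Uz) as [O [L [HO [Oz [HL Hw]]]]].
    destruct (tau_basic O z HO Oz) as [G [BG HG]].
    destruct (proj1 (Hb G) (W_B G z BG)) as [y [By Eyx]]. exists y. split; auto.
    apply Hw; auto. intros l Hl Wy. apply (HL l Hl). apply Hb. apply (W_inv l y x); auto.
Qed.

Lemma approx_tau : forall x y, approxE tau E x y <-> forall b, W b x <-> W b y.
Proof.
  intros x y. unfold approxE. split.
  - intros Heq b.
    assert (Hx : closureT tau (E x) x) by (apply cl_tau; auto).
    assert (Hy : closureT tau (E y) y) by (apply cl_tau; auto).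
    rewrite Heq in Hx. rewrite <- Heq in Hy.
    rewrite cl_tau in Hx, Hy. split; auto.
  - intros Hb. apply functional_extensionality. intro z. apply propositional_extensionality.
    rewrite !cl_tau. split; intros H b Hz; apply Hb; auto; apply H; auto. 
Qed.

Lemma approx_tau' : forall x y, approxE tau' E x y <-> forall b, W b x <-> W b y.
Proof.
  intros x y. unfold approxE. split.
  - intros Heq b.
    assert (Hx : closureT tau' (E x) x) by (apply cl_tau'; tauto).
    rewrite Heq in Hx. rewrite cl_tau' in Hx. apply Hx.
  - intros Hb. apply functional_extensionality. intro z. apply propositional_extensionality.
    rewrite !cl_tau'. split; intros H b; specialize (H b); specialize (Hb b); tauto.
Qed.

Definition cG (j : nat) : nat := fst (Cantor.of_nat j).
Definition cm (j : nat) : nat := snd (Cantor.of_nat j).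
Definition b1 (j : nat) : nat := cG j.
Definition b2 (j : nat) : nat := if Nat.even (cm j) then cG j else Nat.div2 (cm j).
Definition App (j : nat) : Prop :=
  if Nat.even (cm j) then (forall a, BS (cG j) a -> complementS (Fn (Nat.div2 (cm j))) a) else True.
Definition Ok (j k : nat) : Prop :=
  (forall i, mem (cG j) i -> mem k i) /\
  (if Nat.even (cm j) then (forall a, BS k a -> Un (Nat.div2 (cm j)) a)
   else (forall z, W k z -> W (Nat.div2 (cm j)) z)).

Lemma validity : forall x j, App j -> W (b1 j) x -> W (b2 j) x -> exists k, Ok j k /\ W k x.
Proof.
  intros x j HApp H1 H2. unfold App, Ok, b1, b2 in *.
  destruct H1 as [x' [Bx' Ex'x]].
  destruct (Nat.even (cm j)) eqn:Hev.
  - assert (Hc : complementS (Fn (Nat.div2 (cm j))) (h x')) by (apply HApp; exact Bx').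
    assert (HAx : A (h x')) by (apply Himg; eauto).
    apply HA with (n := Nat.div2 (cm j)) in HAx.
    assert (Hun : Un (Nat.div2 (cm j)) (h x')) by (destruct HAx; [auto|contradiction]).
    destruct (sier_open_basic _ _ (HU _) Hun) as [G'' [HG1 HG2]].
    exists (Nat.lor (cG j) G''). split; [split|].
    + intros i Hi. apply mem_lor. auto.
    + intros a Ha. apply HG2. intros i Hi. apply Ha. apply mem_lor. auto.
    + exists x'. split; auto. intros i Hi. apply mem_lor in Hi. destruct Hi; [apply Bx'|apply HG1]; auto.
  - assert (Wx' : W (Nat.div2 (cm j)) x') by (apply (W_inv _ x); auto).
    destruct (tau_basic _ _ (W_open _) Wx') as [G'' [HG1 HG2]].
    exists (Nat.lor (cG j) G''). split; [split|].
    + intros i Hi. apply mem_lor. auto.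
    + apply W_sub_open.
      * intros y Hy. apply HG2. intros i Hi. apply Hy. apply mem_lor. auto.
      * intros; eapply W_inv; eauto.
    + exists x'. split; auto. intros i Hi. apply mem_lor in Hi. destruct Hi; [apply Bx'|apply HG1]; auto.
Qed.

Lemma least_ex : forall P : nat -> Prop, (exists n, P n) -> exists n, P n /\ forall m, m < n -> ~ P m.
Proof.
  intros P [n Hn]. revert Hn. induction n as [n IH] using (well_founded_induction lt_wf).
  intro Hn. destruct (classic (exists m, m < n /\ P m)) as [[m [Hm1 Hm2]]|Hno].
  - exact (IH m Hm1 Hm2).
  - exists n. split; auto. intros m Hm Pm. apply Hno. eauto.
Qed.

Definition Q (x : X) (j k : nat) : Prop :=
  App j /\ W (b1 j) x /\ W (b2 j) x /\ Ok j k /\ W k x /\ forall k', k' < k -> ~ (Ok j k' /\ W k' x).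

Lemma Q_unique : forall x j k k', Q x j k -> Q x j k' -> k = k'.
Proof.
  intros x j k k' [_ [_ [_ [O1 [W1 L1]]]]] [_ [_ [_ [O2 [W2 L2]]]]].
  destruct (lt_eq_lt_dec k k') as [[Hl|He]|Hl]; auto.
  - exfalso. exact (L2 k Hl (conj O1 W1)).
  - exfalso. exact (L1 k' Hl (conj O2 W2)).
Qed.

Definition Kodd (x : X) (j : nat) : nat :=
  match excluded_middle_informative (exists k, Q x j k) with
  | left H => S (proj1_sig (constructive_indefinite_description _ H))
  | right _ => 0
  end.

Lemma Kodd_cases : forall x j, (Kodd x j = 0 /\ ~ exists k, Q x j k) \/ (exists k, Kodd x j = S k /\ Q x j k).
Proof.
  intros x j. unfold Kodd. destruct (excluded_middle_informative (exists k, Q x j k)) as [H|H].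
  - right. destruct (constructive_indefinite_description _ H) as [k Hk]. simpl. eauto.
  - left. auto.
Qed.

Definition bit (x : X) (b : nat) : nat :=
  if excluded_middle_informative (W b x) then 1 else 0.

Lemma bit_iff : forall x b, W b x <-> bit x b = 1.
Proof. intros x b. unfold bit. destruct (excluded_middle_informative (W b x)); split; intro; auto; try discriminate; contradiction. Qed.

Lemma bit_le : forall x b, bit x b = 0 \/ bit x b = 1.
Proof. intros x b. unfold bit. destruct (excluded_middle_informative (W b x)); auto. Qed.

Definition K (x : X) (i : nat) : nat :=
  if Nat.even i then bit x (Nat.div2 i) else Kodd x (Nat.div2 i).

Lemma K_even : forall x b, K x (2 * b) = bit x b.
Proof. intros. unfold K. rewrite Nat.even_even, Nat.div2_double. auto. Qed.

Lemma K_odd : forall x j, K x (2 * j + 1) = Kodd x j.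
Proof. intros. unfold K. rewrite Nat.even_odd, Nat.div2_odd'. auto. Qed.

Lemma K_dep : forall x y, (forall b, W b x <-> W b y) -> forall i, K x i = K y i.
Proof.
  intros x y Hb i. unfold K, bit, Kodd.
  assert (HQ : forall j k, Q x j k <-> Q y j k).
  { intros j k. unfold Q. split; intros [H1 [H2 [H3 [H4 [H5 Hl]]]]].
    - split; [auto|]. split; [apply Hb; auto|]. split; [apply Hb; auto|]. split; [auto|].
      split; [apply Hb; auto|]. intros k' Hk' [Ho Hw]; apply (Hl k' Hk'); split; auto; apply Hb; auto.
    - split; [auto|]. split; [apply Hb; auto|]. split; [apply Hb; auto|]. split; [auto|].
      split; [apply Hb; auto|]. intros k' Hk' [Ho Hw]; apply (Hl k' Hk'); split; auto; apply Hb; auto. }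
  destruct (Nat.even i).
  - destruct (excluded_middle_informative (W (Nat.div2 i) x)), (excluded_middle_informative (W (Nat.div2 i) y)); auto;
    exfalso; firstorder.
  - destruct (excluded_middle_informative (exists k, Q x (Nat.div2 i) k)) as [H1|H1],
      (excluded_middle_informative (exists k, Q y (Nat.div2 i) k)) as [H2|H2].
    + destruct (constructive_indefinite_description _ H1) as [k1 Hk1].
      destruct (constructive_indefinite_description _ H2) as [k2 Hk2]. simpl. f_equal.
      apply (Q_unique y (Nat.div2 i)); auto. apply HQ; auto.
    + exfalso. apply H2. destruct H1 as [k Hk]. exists k. apply HQ; auto.
    + exfalso. apply H1. destruct H2 as [k Hk]. exists k. apply HQ; auto.
    + auto.
Qed.

Lemma Q_transfer : forall x y j k, Q x j k ->
  (forall b, b < S (b1 j + b2 j + k) -> (W b y <-> W b x)) -> Q y j k.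
Proof.
  intros x y j k [H1 [H2 [H3 [H4 [H5 Hl]]]]] Hb.
  split; [auto|]. split; [apply Hb; [lia|auto]|]. split; [apply Hb; [lia|auto]|]. split; [auto|].
  split; [apply Hb; [lia|auto]|]. intros k' Hk' [Ho Hw]. apply (Hl k' Hk'). split; auto. apply Hb; [lia|auto].
Qed.

Lemma Kloc : forall x i, exists N, forall y, (forall b, b < N -> (W b y <-> W b x)) -> K y i = K x i.
Proof.
  intros x i. unfold K. destruct (Nat.even i).
  - exists (S (Nat.div2 i)). intros y Hb. unfold bit.
    destruct (excluded_middle_informative (W (Nat.div2 i) y)) as [h1|h1],
      (excluded_middle_informative (W (Nat.div2 i) x)) as [h2|h2]; auto; exfalso.
    + apply h2. apply Hb; auto.
    + apply h1. apply Hb; auto.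
  - set (j := Nat.div2 i). destruct (Kodd_cases x j) as [[H0 Hn]|[k [Hk HQ]]].
    + destruct (classic (App j /\ W (b1 j) x /\ W (b2 j) x)) as [[Ha [W1 W2]]|Hno].
      * exfalso. destruct (validity x j Ha W1 W2) as [k0 Hk0].
        destruct (least_ex (fun k => Ok j k /\ W k x) (ex_intro _ k0 Hk0)) as [k [[Ok1 Wk] Hl]].
        apply Hn. exists k. split; [auto|]. split; [auto|]. split; [auto|]. split; [exact Ok1|]. split; [exact Wk|]. exact Hl.
      * exists (S (b1 j + b2 j)). intros y Hb. rewrite H0.
        destruct (Kodd_cases y j) as [[H0' _]|[k [_ [Ha [W1 [W2 _]]]]]]; auto.
        exfalso. apply Hno. split; [auto|]. split; apply Hb; auto; lia.
    + exists (S (b1 j + b2 j + k)). intros y Hb. rewrite Hk.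
      assert (HQy : Q y j k) by (apply (Q_transfer x); auto).
      destruct (Kodd_cases y j) as [[_ Hn]|[k' [Hk' HQ']]].
      * exfalso. apply Hn. eauto.
      * rewrite Hk'. f_equal. apply (Q_unique y j); auto.
Qed.

Section Core.
Variable SP : nat -> Prop.
Hypothesis H0 : SP 0.
Hypothesis H3 : forall G j, SP G -> (forall z, W G z -> W j z) -> SP j.
Hypothesis Hex : forall j, App j -> SP (b1 j) -> SP (b2 j) -> exists k, Ok j k /\ SP k.

Definition sub (G G' : nat) : Prop := forall i, mem G i -> mem G' i.

Definition Next (k G G' : nat) : Prop :=
  sub G G' /\ SP G' /\
  (App (Cantor.to_nat (G, fst (Cantor.of_nat k))) -> SP (b2 (Cantor.to_nat (G, fst (Cantor.of_nat k)))) ->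
     Ok (Cantor.to_nat (G, fst (Cantor.of_nat k))) G').

Fixpoint Gs (k : nat) : nat :=
  match k with
  | 0 => 0
  | S k => epsilon (inhabits 0) (Next k (Gs k))
  end.

Lemma Next_ex : forall k G, SP G -> exists G', Next k G G'.
Proof.
  intros k G HG. set (j := Cantor.to_nat (G, fst (Cantor.of_nat k))).
  assert (Hb1 : b1 j = G) by (unfold b1, cG, j; rewrite Cantor.cancel_of_to; reflexivity).
  destruct (classic (App j /\ SP (b2 j))) as [[Ha Hs]|Hno].
  - destruct (Hex j Ha (eq_ind_r SP HG Hb1) Hs) as [k' [Hok Hk']].
    exists k'. split; [|split; auto].
    intros i Hi. apply (proj1 Hok). change (mem (b1 j) i). rewrite Hb1. exact Hi.
  - exists G. split; [intros i Hi; exact Hi|]. split; auto.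
    intros Ha Hs. exfalso. apply Hno. fold j in Ha, Hs. auto.
Qed.

Lemma Gs_spec : forall k, SP (Gs k) /\ Next k (Gs k) (Gs (S k)).
Proof.
  induction k as [|k [IH1 IH2]].
  - split; auto. simpl. apply epsilon_spec. apply Next_ex. auto.
  - split; [apply IH2|]. change (Next (S k) (Gs (S k)) (epsilon (inhabits 0) (Next (S k) (Gs (S k))))).
    apply epsilon_spec. apply Next_ex. apply IH2.
Qed.

Lemma Gs_mono : forall k k', k <= k' -> sub (Gs k) (Gs k').
Proof.
  intros k k' Hle. induction Hle.
  - intros i Hi; exact Hi.
  - intros i Hi. apply (proj1 (proj2 (Gs_spec m))). apply IHHle. exact Hi.
Qed.

Definition alim (i : nat) : bool :=
  if excluded_middle_informative (exists k, mem (Gs k) i) then true else false.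

Lemma alim_BS : forall k, BS (Gs k) alim.
Proof.
  intros k i Hi. unfold alim. destruct (excluded_middle_informative (exists k, mem (Gs k) i)) as [_|Hn]; auto.
  exfalso. apply Hn. eauto.
Qed.

Lemma alim_fin : forall H, BS H alim -> exists k, sub H (Gs k).
Proof.
  intros H HH. destruct (list_of_code H) as [l Hl].
  assert (Hgen : forall l', (forall i, In i l' -> alim i = true) -> exists k, forall i, In i l' -> mem (Gs k) i).
  { induction l' as [|a l' IH]; intros Hal.
    - exists 0. intros i [].
    - destruct IH as [k1 Hk1]. { intros i Hi. apply Hal. right. auto. }
      assert (Ha : alim a = true) by (apply Hal; left; auto).
      unfold alim in Ha. destruct (excluded_middle_informative (exists k, mem (Gs k) a)) as [[k2 Hk2]|]; [|discriminate].
      exists (k1 + k2). intros i [<-|Hi].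
      + apply (Gs_mono k2); [lia|auto].
      + apply (Gs_mono k1); [lia|auto]. }
  destruct (Hgen l) as [k Hk].
  - intros i Hi. apply HH. apply Hl. auto.
  - exists k. intros i Hi. apply Hk. apply Hl. auto.
Qed.

Lemma stage_ex : forall m k0, exists k, k0 <= k /\ fst (Cantor.of_nat k) = m.
Proof.
  intros m k0. exists (Cantor.to_nat (m, k0)). split.
  - pose proof (Cantor.to_nat_non_decreasing m k0). lia.
  - rewrite Cantor.cancel_of_to. reflexivity.
Qed.

Lemma stage_fact : forall k m, fst (Cantor.of_nat k) = m ->
  let j := Cantor.to_nat (Gs k, m) in cG j = Gs k /\ cm j = m.
Proof. intros k m Hm j. unfold j, cG, cm. rewrite Cantor.cancel_of_to. auto. Qed.

Lemma alim_A : A alim.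
Proof.
  apply HA. intro n. destruct (classic (Fn n alim)) as [Hf|Hf]; [right; auto|left].
  destruct (sier_open_basic _ _ (HF n) Hf) as [H [HH1 HH2]].
  destruct (alim_fin H HH1) as [k0 Hk0].
  destruct (stage_ex (2 * n) k0) as [k [Hk Hm]].
  destruct (stage_fact k (2 * n) Hm) as [Hc1 Hc2].
  destruct (Gs_spec k) as [HS [_ [_ Hok]]]. rewrite Hm in Hok.
  assert (Hev : Nat.even (cm (Cantor.to_nat (Gs k, 2 * n))) = true) by (rewrite Hc2; apply Nat.even_even).
  assert (Hd : Nat.div2 (cm (Cantor.to_nat (Gs k, 2 * n))) = n) by (rewrite Hc2; apply Nat.div2_double).
  destruct Hok as [_ Hok].
  - unfold App. rewrite Hev, Hd, Hc1. intros a Ha. apply HH2. intros i Hi. apply Ha.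
    apply (Gs_mono k0 k Hk). auto.
  - unfold b2. rewrite Hev, Hc1. exact HS.
  - rewrite Hev, Hd in Hok. apply Hok. apply alim_BS.
Qed.

Lemma core : exists x, forall b, W b x <-> SP b.
Proof.
  destruct (proj1 (Himg alim) alim_A) as [x Hx]. exists x. intro b. split.
  - intro Wb. destruct (tau_basic _ _ (W_open b) Wb) as [H [HH1 HH2]].
    unfold B in HH1. rewrite Hx in HH1. destruct (alim_fin H HH1) as [k Hk].
    apply (H3 (Gs k)); [apply Gs_spec|].
    apply W_sub_open.
    + intros y Hy. apply HH2. intros i Hi. apply Hy. apply Hk. auto.
    + intros; eapply W_inv; eauto.
  - intro Sb. destruct (stage_ex (2 * b + 1) 0) as [k [_ Hm]].
    destruct (stage_fact k _ Hm) as [Hc1 Hc2].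
    destruct (Gs_spec k) as [HS [_ [_ Hok]]]. rewrite Hm in Hok.
    assert (Hev : Nat.even (cm (Cantor.to_nat (Gs k, 2 * b + 1))) = false) by (rewrite Hc2; apply Nat.even_odd).
    assert (Hd : Nat.div2 (cm (Cantor.to_nat (Gs k, 2 * b + 1))) = b) by (rewrite Hc2; apply Nat.div2_odd').
    destruct Hok as [_ Hok].
    + unfold App. rewrite Hev. exact I.
    + unfold b2. rewrite Hev, Hd. exact Sb.
    + rewrite Hev, Hd in Hok. apply Hok. apply W_B. unfold B. rewrite Hx. apply alim_BS.
Qed.
End Core.

Lemma Kclosed : forall L : nat -> nat, (forall M, exists x, forall i, i < M -> K x i = L i) ->
  exists x, forall i, K x i = L i.
Proof.
  intros L HL.
  set (SP := fun b => L (2 * b) = 1).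
  assert (Hreal : forall M, exists x, (forall i, i < M -> K x i = L i) /\ forall b, 2 * b < M -> (W b x <-> SP b)).
  { intro M. destruct (HL M) as [x Hx]. exists x. split; auto. intros b Hb. unfold SP.
    rewrite <- (Hx _ Hb), K_even. apply bit_iff. }
  assert (H0 : SP 0).
  { destruct (Hreal 1) as [x [_ Hx]]. apply Hx; [lia|]. apply W_0. }
  assert (H3 : forall G j, SP G -> (forall z, W G z -> W j z) -> SP j).
  { intros G j HG Hsub. destruct (Hreal (2 * (G + j) + 2)) as [x [_ Hx]].
    apply Hx; [lia|]. apply Hsub. apply Hx; [lia|auto]. }
  assert (Hex : forall j, App j -> SP (b1 j) -> SP (b2 j) -> exists k, Ok j k /\ SP k).
  { intros j Ha S1 S2. set (v := L (2 * j + 1)).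
    destruct (Hreal (2 * (b1 j + b2 j + j + v) + 2)) as [x [HxK Hx]].
    assert (W1 : W (b1 j) x) by (apply Hx; [lia|auto]).
    assert (W2 : W (b2 j) x) by (apply Hx; [lia|auto]).
    destruct (validity x j Ha W1 W2) as [k0 Hk0].
    destruct (least_ex (fun k => Ok j k /\ W k x) (ex_intro _ k0 Hk0)) as [k [[Ok1 Wk] Hl]].
    destruct (Kodd_cases x j) as [[_ Hn]|[k' [Hk' HQ]]].
    - exfalso. apply Hn. exists k. split; [auto|]. split; [auto|]. split; [auto|]. split; [exact Ok1|]. split; [exact Wk|]. exact Hl.
    - assert (Hv : S k' = v). { rewrite <- Hk', <- K_odd. apply HxK. lia. }
      destruct HQ as [_ [_ [_ [Ok' [Wk' _]]]]]. exists k'. split; auto.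
      apply Hx; [lia|auto]. }
  destruct (core SP H0 H3 Hex) as [x0 Hx0]. exists x0. intro i.
  destruct (Kloc x0 i) as [N HN].
  destruct (Hreal (2 * N + i + 1)) as [x [HxK Hx]].
  rewrite <- (HxK i) by lia. symmetry. apply HN. intros b Hb. rewrite Hx by lia. rewrite Hx0. tauto.
Qed.

Definition Qt : Type := qtype tau' E.
Definition qp (x : X) : Qt := qproj tau' E x.

Lemma exist_eq_pi : forall (P : (X -> Prop) -> Prop) (A1 A2 : X -> Prop) (p1 : P A1) (p2 : P A2),
  A1 = A2 -> exist P A1 p1 = exist P A2 p2.
Proof. intros P A1 A2 p1 p2 ->. f_equal. apply proof_irrelevance. Qed.

Lemma qp_eq : forall x y, (forall b, W b x <-> W b y) -> qp x = qp y.
Proof.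
  intros x y Hb. apply approx_tau' in Hb. unfold qp, qproj. apply exist_eq_pi.
  apply functional_extensionality. intro z. apply propositional_extensionality.
  unfold approx_class, approxE in *. rewrite Hb. tauto.
Qed.

Lemma qp_surj : forall q : Qt, exists x, q = qp x.
Proof.
  intros [P [x Hx]]. exists x. unfold qp, qproj. apply exist_eq_pi. exact Hx.
Qed.

Definition rep (q : Qt) : X := proj1_sig (constructive_indefinite_description _ (qp_surj q)).

Lemma rep_spec : forall q, q = qp (rep q).
Proof. intro q. unfold rep. destruct (constructive_indefinite_description _ (qp_surj q)). auto. Qed.

Lemma qp_inv : forall x y, qp x = qp y -> forall b, W b x <-> W b y.
Proof.
  intros x y H. apply approx_tau'. apply (f_equal (@proj1_sig _ _)) in H. simpl in H.
  assert (Hy : approx_class tau' E y y) by reflexivity.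
  rewrite <- H in Hy. exact Hy.
Qed.

Definition Kq (q : Qt) : nat -> nat := K (rep q).

Lemma Kq_qp : forall x i, Kq (qp x) i = K x i.
Proof.
  intros x i. unfold Kq. apply K_dep. apply qp_inv. symmetry. apply rep_spec.
Qed.

Lemma K_bits : forall x y, (forall i, K x i = K y i) -> forall b, W b x <-> W b y.
Proof.
  intros x y H b. rewrite !bit_iff. rewrite <- !K_even. rewrite H. tauto.
Qed.

Lemma Kq_inj : forall q1 q2, (forall i, Kq q1 i = Kq q2 i) -> q1 = q2.
Proof.
  intros q1 q2 H. rewrite (rep_spec q1), (rep_spec q2). apply qp_eq. apply K_bits. exact H.
Qed.

Definition dq (q1 q2 : Qt) : R := delta (Kq q1) (Kq q2).

Lemma dq_metric : is_metric dq.
Proof.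
  unfold dq. split; [|split; [|split]].
  - intros; apply delta_nonneg.
  - intros x y. rewrite delta_zero. split.
    + apply Kq_inj.
    + intros ->. auto.
  - intros; apply delta_sym.
  - intros; apply delta_tri.
Qed.

Definition bitcyl (x : X) (N : nat) (y : X) : Prop := forall b, b < N -> (W b y <-> W b x).

Lemma bitcyl_open : forall x N, tau' (bitcyl x N).
Proof.
  intros x N. induction N as [|N IH].
  - apply (gen_top_ext _ _ (fun _ => True)). { apply tau_tau'. apply tau_True. }
    intro y. split; auto. intros _ b Hb. lia.
  - destruct (classic (W N x)) as [Hw|Hw].
    + apply (gen_top_ext _ _ (fun y => bitcyl x N y /\ W N y)).
      { apply (proj1 (proj2 (gen_top_topology _ _))); auto. apply tau_tau'. apply W_open. }
      intro y. split.
      * intros [H1 H2] b Hb. destruct (Nat.eq_dec b N) as [->|]; [tauto|]. apply H1. lia.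
      * intros H. split; [intros b Hb; apply H; lia|]. apply H; auto.
    + apply (gen_top_ext _ _ (fun y => bitcyl x N y /\ C N y)).
      { apply (proj1 (proj2 (gen_top_topology _ _))); auto. apply C_open'. }
      intro y. split.
      * intros [H1 H2] b Hb. destruct (Nat.eq_dec b N) as [->|]; [unfold C, complementS in H2; tauto|]. apply H1. lia.
      * intros H. split; [intros b Hb; apply H; lia|]. unfold C, complementS. intro Hy. apply Hw. apply H; auto.
Qed.

Lemma Kloc_prefix : forall x m, exists N, forall y, bitcyl x N y -> forall i, i <= m -> K y i = K x i.
Proof.
  intros x m. induction m as [|m [N IH]].
  - destruct (Kloc x 0) as [N HN]. exists N. intros y Hy i Hi. assert (i = 0) as -> by lia. apply HN. auto.
  - destruct (Kloc x (S m)) as [N' HN']. exists (N + N'). intros y Hy i Hi.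
    destruct (Nat.eq_dec i (S m)) as [->|Hne].
    + apply HN'. intros b Hb. apply Hy. lia.
    + apply IH; [|lia]. intros b Hb. apply Hy. lia.
Qed.

Lemma list_bound : forall Ls : list nat, exists M, forall l, In l Ls -> l < M.
Proof.
  induction Ls as [|a Ls [M HM]].
  - exists 0. intros l [].
  - exists (S a + M). intros l [<-|Hl]; [lia|]. specialize (HM l Hl). lia.
Qed.

Lemma topo_eq : forall U : Qt -> Prop, quot_top tau' E U <-> metric_open dq U.
Proof.
  intro U. unfold quot_top. split.
  - intros HP q Uq. set (x := rep q).
    assert (Px : U (qproj tau' E x)) by (change (U (qp x)); unfold x; rewrite <- rep_spec; auto).
    destruct (tau'_local _ HP x Px) as [O [Ls [HO [Ox [HL Hw]]]]].
    destruct (tau_basic O x HO Ox) as [G [BG HG]].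
    destruct (list_bound Ls) as [M HM].
    set (m := 2 * (G + M) + 2).
    exists (/ INR (S m))%R. split; [apply inv_pos|].
    intros q2 Hd. unfold dq in Hd. pose proof (proj2 (delta_lt _ _ _) Hd) as Hd2. clear Hd. rename Hd2 into Hd.
    set (x2 := rep q2).
    assert (Hbits : forall b, b < G + M + 1 -> (W b x <-> W b x2)).
    { intros b Hb. rewrite !bit_iff, <- !K_even. fold x x2 in Hd. unfold Kq in Hd. rewrite Hd; [tauto|lia]. }
    destruct (proj1 (Hbits G ltac:(lia)) (W_B G x BG)) as [y [By Eyx2]].
    assert (Py : U (qproj tau' E y)).
    { apply Hw.
      - apply HG. exact By.
      - intros l Hl Wy. apply (HL l Hl). apply Hbits. { specialize (HM l Hl). lia. }
        apply (W_inv l y x2); auto. }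
    change (U (qp y)) in Py. rewrite (rep_spec q2). fold x2.
    replace (qp x2) with (qp y); auto. apply qp_eq. intro b. split; intro H.
    + apply (W_inv b y x2); auto.
    + apply (W_inv b x2 y); auto.
  - intros Hm.
    set (I := {p : X * nat | U (qp (fst p)) /\ forall y, bitcyl (fst p) (snd p) y -> U (qp y)}).
    apply (gen_top_ext _ _ (fun y => exists i : I, bitcyl (fst (proj1_sig i)) (snd (proj1_sig i)) y)).
    { apply (proj2 (proj2 (gen_top_topology _ _))). intro i. apply bitcyl_open. }
    intro y. split.
    + intros [[[x N] [Ux Hc]] Hy]. simpl in *. apply Hc. exact Hy.
    + intros Uy. destruct (Hm (qp y) Uy) as [eps [Heps Hball]].
      destruct (archimed_cor1 eps Heps) as [n [Hn Hn0]].
      destruct n as [|m]; [lia|].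
      destruct (Kloc_prefix y m) as [N HN].
      assert (Hc : forall z, bitcyl y N z -> U (qp z)).
      { intros z Hz. apply Hball. unfold dq.
        apply Rlt_trans with (/ INR (S m))%R; auto. apply delta_lt. intros i Hi.
        rewrite !Kq_qp. symmetry. apply HN; auto. }
      exists (exist _ (y, N) (conj Uy Hc)). simpl. intros b Hb. tauto.
Qed.

Lemma dq_complete : metric_complete dq.
Proof.
  intros s Hc.
  assert (HN : forall i, exists N, forall n, N <= n -> forall i', i' <= i -> Kq (s n) i' = Kq (s N) i').
  { intro i. destruct (Hc _ (inv_pos i)) as [N HN]. exists N. intros n Hn i' Hi'.
    apply (proj2 (delta_lt _ _ i)); auto. apply HN; lia. }
  set (Nf := fun i => proj1_sig (constructive_indefinite_description _ (HN i))).
  assert (HNf : forall i n, Nf i <= n -> forall i', i' <= i -> Kq (s n) i' = Kq (s (Nf i)) i').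
  { intro i. unfold Nf. destruct (constructive_indefinite_description _ (HN i)) as [N HNN]. simpl. auto. }
  set (L := fun i => Kq (s (Nf i)) i).
  assert (Hbound : forall M, exists n, forall i, i < M -> Nf i <= n).
  { induction M as [|M [n Hn]].
    - exists 0. intros i Hi. lia.
    - exists (n + Nf M). intros i Hi. destruct (Nat.eq_dec i M) as [->|]; [lia|]. specialize (Hn i ltac:(lia)). lia. }
  assert (HLn : forall i n, Nf i <= n -> Kq (s n) i = L i).
  { intros i n Hn. unfold L. apply (HNf i n Hn). lia. }
  destruct (Kclosed L) as [x Hx].
  { intro M. destruct (Hbound M) as [n Hn]. exists (rep (s n)). intros i Hi.
    change (Kq (s n) i = L i). apply HLn. auto. }
  exists (qp x). intros eps Heps.
  destruct (archimed_cor1 eps Heps) as [k [Hk Hk0]]. destruct k as [|m]; [lia|].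
  destruct (Hbound (S m)) as [n0 Hn0]. exists n0. intros n Hn.
  apply Rlt_trans with (/ INR (S m))%R; auto. unfold dq. apply delta_lt. intros i Hi.
  rewrite Kq_qp, Hx. apply HLn. specialize (Hn0 i ltac:(lia)). lia.
Qed.

Fixpoint enc (a : nat -> nat) (m : nat) : nat :=
  match m with
  | 0 => 0
  | S m => S (Cantor.to_nat (a m, enc a m))
  end.

Lemma enc_inj : forall a b m m', enc a m = enc b m' -> m = m' /\ forall i, i < m -> a i = b i.
Proof.
  intros a b m. induction m as [|m IH]; intros [|m'] H; simpl in H; try discriminate.
  - split; auto. intros i Hi. lia.
  - assert (H0 : Cantor.to_nat (a m, enc a m) = Cantor.to_nat (b m', enc b m')) by (injection H; auto). clear H. rename H0 into H.
    apply (f_equal Cantor.of_nat) in H. rewrite !Cantor.cancel_of_to in H.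
    injection H as H1 H2. destruct (IH m' H2) as [-> Hag]. split; auto.
    intros i Hi. destruct (Nat.eq_dec i m') as [->|]; auto. apply Hag. lia.
Qed.

Definition fq (n : nat) : option Qt :=
  match excluded_middle_informative (exists q m, enc (Kq q) m = n) with
  | left H => Some (proj1_sig (constructive_indefinite_description _ H))
  | right _ => None
  end.


Lemma fq_some : forall n, (exists q m, enc (Kq q) m = n) -> exists q', fq n = Some q' /\ exists m, enc (Kq q') m = n.
Proof.
  intros n Hn. unfold fq. destruct (excluded_middle_informative (exists q m, enc (Kq q) m = n)) as [H|H].
  - destruct (constructive_indefinite_description _ H) as [q' Hq']. simpl. eauto.
  - contradiction.
Qed.

Lemma dq_separable : separable (quot_top tau' E).
Proof.
  exists (fun q => exists n, fq n = Some q). split.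
  - exists fq. intros x Hx. exact Hx.
  - intros U HUo [q Uq]. apply topo_eq in HUo. destruct (HUo q Uq) as [eps [Heps Hball]].
    destruct (archimed_cor1 eps Heps) as [k [Hk Hk0]]. destruct k as [|m]; [lia|].
    destruct (fq_some (enc (Kq q) (S m))) as [q' [Hf [m' Hm']]]; [eauto|].
    destruct (enc_inj _ _ _ _ Hm') as [Heq Hag]. subst m'.
    exists q'. split; [|eauto]. apply Hball. apply Rlt_trans with (/ INR (S m))%R; auto.
    unfold dq. apply delta_lt. intros i Hi. symmetry. apply Hag. lia.
Qed.

Lemma main_polish : polish (quot_top tau' E).
Proof.
  split; [apply dq_separable|]. exists dq. split; [apply dq_metric|]. split; [apply dq_complete|].
  apply topo_eq.
Qed.

End Main.

Theorem corollary2p4 (X : Type) (tau : opfam X) (E : X -> X -> Prop) :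
  quasi_polish tau ->
  equivalence_rel E ->
  (forall U, tau U -> tau (saturation E U)) ->
  exists C : nat -> X -> Prop,
    (forall n, tau (complementS (C n))) /\
    (forall n x y, E x y -> C n x -> C n y) /\
    (forall x y, approxE (gen_top (fun V => tau V \/ exists n, V = C n)) E x y
                 <-> approxE tau E x y) /\
    polish (quot_top (gen_top (fun V => tau V \/ exists n, V = C n)) E).
Proof.
  intros [A [h [[Un [Fn [HU [HF HA]]]] [_ [Himg Htau]]]]] [HEr [HEs HEt]] Hsat.
  exists (C X E h). split; [|split; [|split]].
  - intro n. apply (tau_ext X tau h Htau (W X E h n)).
    + apply (W_open X tau E h Htau Hsat).
    + intro x. unfold C, complementS. split; [intros H1 H2; exact (H2 H1)|apply NNPP].
  - intros n x y Hxy Hx Hy. apply Hx. apply (W_inv X E h HEt n y x); auto.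
  - intros x y. rewrite (approx_tau' X tau E h Htau HEr HEs HEt Hsat), (approx_tau X tau E h Htau HEr HEs HEt Hsat). tauto.
  - apply (main_polish X tau E h A Un Fn HU HF HA Himg Htau HEr HEs HEt Hsat).
Qed.
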